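(* Let $n\ge 3$ and let $CH_n$ be the closed Helm graph. Then $$\chi'(CH_n)=\begin{cases}3(n+1) & \text{if } n \text{ is even},\\ 3n+7 & \text{if } n \text{ is odd}.\end{cases}$$
   Context: The closed Helm graph $CH_n$ has vertices $v, v_1,\dots,v_n,u_1,\dots,u_n$; $v_1\dots v_n$ form a cycle, $u_1\dots u_n$ form a cycle (in this order), $v$ is adjacent to every $v_i$, and $u_i$ is adjacent to $v_i$ for each $i$ (i.e. the Helm graph with its pendant vertices joined into an outer cycle). For a proper colouring $c:V(G)\to\{1,\dots,k\}$ (colour $c_i$ identified with $i$), the colouring sum is $\sum_{i=1}^k i\,\theta(c_i)=\sum_v c(v)$, $\theta(c_i)$ the number of vertices of colour $c_i$. The $\chi$-chromatic sum $\chi'(G)$ is the minimum colouring sum over all proper colourings $c:V(G)\to\{1,\dots,\chi(G)\}$, $\chi(G)$ the chromatic number. *)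

(* Defs.v *)
From mathcomp Require Import all_boot.
Set Implicit Arguments. Unset Strict Implicit. Unset Printing Implicit Defensive.

Section Colouring.
Variable T : finType.
Variable e : rel T.

(* A proper colouring with k colours; colour (i : 'I_k) is identified with i+1. *)
Definition proper_colouring (k : nat) (c : T -> 'I_k) : bool :=
  [forall x, forall y, e x y ==> (c x != c y)].

Definition colourable (k : nat) : bool :=
  [exists c : {ffun T -> 'I_k}, proper_colouring c].

(* chromatic number: least k such that a proper k-colouring exists
   (#|T| colours always suffice, so the default is never the minimum's witness
   unless it is the true value). *)
Definition chromatic_number : nat :=
  \big[minn/#|T|]_(k < #|T|.+1 | colourable k) k.

Definition colouring_sum (k : nat) (c : T -> 'I_k) : nat :=
  \sum_(x : T) (nat_of_ord (c x)).+1.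

(* chi-chromatic sum: minimum colouring sum over proper colourings using
   colours 1..chi(G). Default #|T| * chi(G) is an upper bound of every such sum. *)
Definition chi_chromatic_sum : nat :=
  \big[minn/(#|T| * chromatic_number)]_(c : {ffun T -> 'I_chromatic_number}
        | proper_colouring c) colouring_sum c.
End Colouring.

(* Closed Helm graph CH_n.
   None = hub v; Some (i, false) = v_(i+1) (inner cycle); Some (i, true) = u_(i+1). *)
Definition CH_vertex (n : nat) : finType := option ('I_n * bool).

Definition cyc_adj (n : nat) (i j : 'I_n) : bool :=
  (nat_of_ord j == i.+1 %% n) || (nat_of_ord i == j.+1 %% n).

Definition CH_adj (n : nat) : rel (CH_vertex n) := fun x y =>
  match x, y with
  | None, Some (_, b) => ~~ b
  | Some (_, b), None => ~~ b
  | Some (i, b), Some (j, b') =>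
      ((b == b') && cyc_adj i j) || ((i == j) && (b != b'))
  | None, None => false
  end.

(* Main.v *)
Require Import Defs.
From mathcomp Require Import all_boot zify.
Lemma sum_ordS n (F : 'I_n -> nat) : \sum_(i < n) F (ordS i) = \sum_(i < n) F i.
Proof. by rewrite [RHS](reindex_inj (@ordS_inj n)). Qed.

Lemma parity (m : nat) (F : 'I_m.+1 -> nat) : ~~ odd m ->
  (forall i, F i != F (ordS i)) -> forall a b, (forall i, F i = a \/ F i = b) -> False.
Proof.
move=> em pr a b ab.
case: m em F pr ab => [|m] em F pr ab.
  have e0 : ordS (@ord0 0) = ord0 by apply: val_inj.
  by move: (pr ord0); rewrite e0 eqxx.
pose g := fun k => F (inord k).
have step : forall k, k < m.+1 -> g k.+1 != g k.
  move=> k lk; rewrite /g eq_sym.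
  have -> : (inord k.+1 : 'I_m.+2) = ordS (inord k).
    by apply: val_inj; rewrite /= !inordK ?modn_small //; lia.
  exact: pr.
have g01 : g 1 != g 0 by apply: step.
have inab : forall k, g k = g 0 \/ g k = g 1.
  move=> k; have := ab (inord k); have := ab (inord 0); have := ab (inord 1).
  rewrite -/(g k) -/(g 0) -/(g 1); move: g01.
  move: (g k) (g 0) (g 1) => x y z; lia.
have par : forall k, k <= m.+1 -> g k = if odd k then g 1 else g 0.
  elim=> [|k IH] lk //=.
  have := step k lk; rewrite IH 1?ltnW //.
  case: (inab k.+1) => ->; case: (odd k) => //=; rewrite ?eqxx //.
have := pr ord_max.
have -> : ordS (@ord_max m.+1) = inord 0.
  by apply: val_inj; rewrite /= inordK // modnn.
have -> : (@ord_max m.+1) = inord m.+1 by apply: val_inj; rewrite /= inordK.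
rewrite -/(g 0) -/(g m.+1) par //=; by move: em => /= /negbNE -> ; rewrite eqxx.
Qed.

Lemma indep m (F : 'I_m.+1 -> nat) a : ~~ odd m ->
  (forall i, F i != F (ordS i)) -> 2 * \sum_(i < m.+1) (F i == a) <= m.
Proof.
move=> em pr.
have H : \sum_(i < m.+1) ((F i == a) + (F (ordS i) == a)) <= \sum_(i < m.+1) 1.
  apply: leq_sum => i _; have := pr i.
  move: (F i) (F (ordS i)) => x y.
  by case: (x =P a) => [->|]; case: (y =P a) => [->|] //; rewrite eqxx.
rewrite big_split /= in H. rewrite (@sum_ordS _ (fun i => nat_of_bool (F i == a))) in H. rewrite sum1_card card_ord in H.
have : m %% 2 = 0 by rewrite modn2 (negbTE em).
rewrite addnn -mul2n in H; move: H; set S := (X in 2 * X <= _.+1); rewrite -/S; lia.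
Qed.

Lemma cbound m (F : 'I_m.+1 -> nat) a b c : ~~ odd m ->
  (forall i, F i != F (ordS i)) -> a < b -> b < c ->
  (forall i, F i = a \/ F i = b \/ c <= F i) ->
  2 * m.+1 * a + (b - a) * m.+2 + 2 * (c - b) <= 2 * \sum_(i < m.+1) F i.
Proof.
move=> em pr ab bc Hv.
have [j Hj] : exists j, (F j != a) && (F j != b).
  case: (pickP (fun j => (F j != a) && (F j != b))) => [j Hj|H]; first by exists j.
  exfalso; apply: (@parity _ _ em pr a b) => i.
  by move: (H i); case: eqP => [|_]; [left | case: eqP => [|_]; [right|]].
have pw : forall i, a + (b - a) * (F i != a) + (c - b) * ((F i != a) && (F i != b)) <= F i.
  move=> i; case: (Hv i) => [->|[->|]]; rewrite ?eqxx /=.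
  - lia.
  - have -> : (b != a) by rewrite neq_ltn ab orbT.
    lia.
  - move=> ci; have -> : (F i != a) by rewrite neq_ltn; apply/orP; right; lia.
    have -> : (F i != b) by rewrite neq_ltn; apply/orP; right; lia.
    lia.
have S : \sum_(i < m.+1) (a + (b - a) * (F i != a) + (c - b) * ((F i != a) && (F i != b))) <= \sum_(i < m.+1) F i.
  by apply: leq_sum => i _; exact: pw.
rewrite !big_split /= sum_nat_const card_ord -!big_distrr /= in S.
have XA : \sum_(i < m.+1) (F i != a) + \sum_(i < m.+1) (F i == a) = m.+1.
  rewrite -big_split /= -[RHS]card_ord -sum1_card.
  by apply: eq_bigr => i _; case: eqP.
have Y1 : 1 <= \sum_(i < m.+1) ((F i != a) && (F i != b)).
  by rewrite (bigD1 j) //= Hj.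
have I := @indep m F a em pr.
move: S XA Y1 I.
set X := \sum_(i < m.+1) (F i != a).
set A := \sum_(i < m.+1) (F i == a).
set Y := \sum_(i < m.+1) _.
set T := \sum_(i < m.+1) F i.
move=> S XA Y1 I.
have h1 : (b - a) * m.+2 <= 2 * ((b - a) * X).
  rewrite mulnCA leq_mul2l; apply/orP; right; lia.
have h2 : c - b <= (c - b) * Y by rewrite leq_pmulr.
lia.
Qed.

Lemma bigmin_eq (I : finType) (P : pred I) (F : I -> nat) d m :
  (exists2 i, P i & F i = m) -> (forall i, P i -> m <= F i) -> m <= d ->
  \big[minn/d]_(i | P i) F i = m.
Proof.
move=> [i0 Pi0 Fi0] lo md; apply/eqP; rewrite eqn_leq; apply/andP; split.
  have H : forall r, i0 \in r -> \big[minn/d]_(i <- r | P i) F i <= m.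
    elim=> // a r IH; rewrite inE big_cons => /orP [/eqP <-|ir].
      by rewrite Pi0 Fi0 geq_minl.
    by case: (P a); [apply: leq_trans (geq_minr _ _) (IH ir) | exact: IH].
  exact: H (mem_index_enum i0).
by apply: (big_ind (fun x => m <= x)) => // x y hx hy; rewrite leq_min hx hy.
Qed.

Lemma proper_nat (T : finType) (e : rel T) k (c : T -> 'I_k) :
  proper_colouring e c -> forall x y, e x y -> (c x : nat) != c y.
Proof. by move=> /forallP H x y exy; move: (H x) => /forallP /(_ y); rewrite exy. Qed.

Lemma proper_of_col (T : finType) (e : rel T) k (col : T -> nat) :
  (forall x, col x < k.+1) -> (forall x y, e x y -> col x != col y) ->
  proper_colouring e [ffun x => (inord (col x) : 'I_k.+1)].
Proof.
move=> lt pr; apply/forallP => x; apply/forallP => y; apply/implyP => exy.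
by rewrite !ffunE; apply/eqP => /(congr1 val) /=; rewrite !inordK //; apply/eqP/pr.
Qed.

Lemma sum_of_col (T : finType) k (col : T -> nat) :
  (forall x, col x < k.+1) ->
  colouring_sum [ffun x => (inord (col x) : 'I_k.+1)] = \sum_x (col x).+1.
Proof. by move=> lt; apply: eq_bigr => x _; rewrite ffunE inordK. Qed.

Lemma sum_opt (T : finType) (t0 : T) (F : option T -> nat) :
  \sum_(x : option T) F x = F None + \sum_(p : T) F (Some p).
Proof.
rewrite (bigD1 None) //=; congr (_ + _).
rewrite (reindex (@Some T)) /=.
  by apply: eq_bigl => p.
by exists (odflt t0) => [x _ | [x|] //=].
Qed.

Lemma sum_pair n (F : 'I_n * bool -> nat) :
  \sum_(p : 'I_n * bool) F p = \sum_(i < n) (F (i, false) + F (i, true)).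
Proof.
transitivity (\sum_(p : 'I_n * bool) F (p.1, p.2)); first by apply: eq_bigr => [[]].
rewrite -(pair_bigA _ (fun i b => F (i, b))) /=.
by apply: eq_bigr => i _; rewrite big_bool addnC.
Qed.

Lemma CH_sum m (col : CH_vertex m.+1 -> nat) :
  \sum_(x : CH_vertex m.+1) (col x).+1 =
  (col None) + \sum_(i < m.+1) col (Some (i, false)) + \sum_(i < m.+1) col (Some (i, true))
  + (2 * m.+1).+1.
Proof.
rewrite (@sum_opt _ (ord0, false)) sum_pair.
have -> : \sum_(i < m.+1) ((col (Some (i, false))).+1 + (col (Some (i, true))).+1)
   = \sum_(i < m.+1) (col (Some (i, false)) + col (Some (i, true)) + 2).
  by apply: eq_bigr => i _; rewrite addnS addSn addn2.
rewrite !big_split /= sum_nat_const card_ord; lia.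
Qed.

Lemma ordS_val m (i : 'I_m.+1) : (ordS i : nat) = if i < m then i.+1 else 0.
Proof.
rewrite /=; case: ltnP => h; first by rewrite modn_small.
have -> : i.+1 = m.+1 by have := ltn_ord i; lia.
by rewrite modnn.
Qed.

Lemma CH_proper n (col : CH_vertex n -> nat) :
  (forall i, col None != col (Some (i, false))) ->
  (forall i, col (Some (i, false)) != col (Some (i, true))) ->
  (forall i b, col (Some (i, b)) != col (Some (ordS i, b))) ->
  forall x y, CH_adj x y -> col x != col y.
Proof.
move=> h1 h2 h3 [[i b]|] [[j b']|] //=.
- case/orP => [/andP [/eqP <- /orP [/eqP ej | /eqP ei]] | /andP [/eqP <- bb']].
  + have -> : j = ordS i by apply: val_inj.
    exact: h3.
  + have -> : i = ordS j by apply: val_inj.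
    by rewrite eq_sym; exact: h3.
  + by case: b bb'; case: b' => //= _; rewrite // eq_sym.
- by case: b => //= _; rewrite eq_sym.
- by case: b' => //= _.
Qed.

Lemma adj_hub n (i : 'I_n) : CH_adj None (Some (i, false)).
Proof. by []. Qed.
Lemma adj_spoke n (i : 'I_n) : CH_adj (Some (i, false)) (Some (i, true)).
Proof. by rewrite /= eqxx. Qed.
Lemma adj_cyc n (i : 'I_n) b : CH_adj (Some (i, b)) (Some (ordS i, b)).
Proof. by rewrite /= eqxx /cyc_adj /= eqxx. Qed.

Lemma modS_val m (i : 'I_m.+1) : i.+1 %% m.+1 = if i < m then i.+1 else 0.
Proof. exact: (@ordS_val m i). Qed.

Definition colE m (x : CH_vertex m.+1) : nat :=
  match x with None => 2 | Some (i, false) => i %% 2 | Some (i, true) => i.+1 %% 2 end.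

Definition colO m (x : CH_vertex m.+1) : nat :=
  match x with None => 3
  | Some (i, false) => if (i : nat) == m then 2 else i %% 2
  | Some (i, true) => if (i : nat) == m then 0 else if (i : nat) == m.-1 then 2 else i.+1 %% 2 end.

Lemma colE_lt m x : colE m x < 3.
Proof. case: x => [[i []]|] /=; lia. Qed.
Lemma colO_lt m x : colO m x < 4.
Proof. case: x => [[i []]|] /=; repeat case: eqP => ?; lia. Qed.

Lemma colE_proper m : odd m -> forall x y, CH_adj x y -> colE m x != colE m y.
Proof.
move=> hm; have hm' : m %% 2 = 1 by rewrite modn2 hm.
apply: CH_proper.
- move=> i /=; apply/eqP; lia.
- move=> i /=; apply/eqP; lia.
- move=> i [|] /=; rewrite modS_val; case: ltnP => ?; have ? := ltn_ord i; apply/eqP; lia.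
Qed.

Lemma colO_proper m : ~~ odd m -> 2 <= m -> forall x y, CH_adj x y -> colO m x != colO m y.
Proof.
move=> hm hm2; have hm' : m %% 2 = 0 by rewrite modn2 (negbTE hm).
apply: CH_proper.
- move=> i /=; apply/eqP; repeat case: eqP => ?; lia.
- move=> i /=; apply/eqP; repeat case: eqP => ?; lia.
- move=> i [|] /=; rewrite modS_val; case: ltnP => ?; have ? := ltn_ord i; apply/eqP;
    repeat case: eqP => ?; lia.
Qed.

Lemma sum_mod2 k : \sum_(i < k) (i %% 2) = k %/ 2.
Proof. elim: k => [|k IH]; first by rewrite big_ord0. rewrite big_ord_recr /= IH; lia. Qed.
Lemma sum_mod2S k : \sum_(i < k) (i.+1 %% 2) = k.+1 %/ 2.
Proof. elim: k => [|k IH]; first by rewrite big_ord0. rewrite big_ord_recr /= IH; lia. Qed.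

Lemma colE_sum m : odd m -> \sum_(x : CH_vertex m.+1) (colE m x).+1 = 3 * (m.+1 + 1).
Proof.
move=> hm; have hm' : m %% 2 = 1 by rewrite modn2 hm.
rewrite CH_sum /= (sum_mod2 m.+1) (sum_mod2S m.+1); lia.
Qed.

Lemma sum_recr k (f : nat -> nat) : \sum_(i < k.+1) f i = \sum_(i < k) f i + f k.
Proof. by rewrite big_ord_recr. Qed.

Lemma colO_sum m : ~~ odd m -> 2 <= m -> \sum_(x : CH_vertex m.+1) (colO m x).+1 = 3 * m.+1 + 7.
Proof.
move=> hm hm2; have hm' : m %% 2 = 0 by rewrite modn2 (negbTE hm).
rewrite CH_sum.
have -> : \sum_(i < m.+1) colO m (Some (i, false)) = m %/ 2 + 2.
  rewrite (sum_recr m (fun i => if i == m then 2 else i %% 2)) eqxx -(sum_mod2 m); congr (_ + _).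
  by apply: eq_bigr => i _; rewrite ifN // neq_ltn ltn_ord.
case: m hm hm2 hm' => [|m] // hm hm2 hm'.
have -> : \sum_(i < m.+2) colO m.+1 (Some (i, true)) = m.+1 %/ 2 + 2.
  rewrite (sum_recr m.+1 (fun i => if i == m.+1 then 0 else if i == m then 2 else i.+1 %% 2)).
  rewrite (sum_recr m (fun i => if i == m.+1 then 0 else if i == m then 2 else i.+1 %% 2)).
  rewrite eqxx ltn_eqF // eqxx -(sum_mod2S m) addn0; congr (_ + _).
  apply: eq_bigr => i _; have ? := ltn_ord i.
  by rewrite ifN ?ifN // neq_ltn ?ltn_ord // ltnW // ltnS ltn_ord.
have -> : colO m.+1 None = 3 by [].
lia.
Qed.

Lemma chi_low_even m k (c : CH_vertex m.+1 -> 'I_k) : proper_colouring (@CH_adj m.+1) c -> 3 <= k.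
Proof.
move=> pc; have pr := @proper_nat _ _ _ _ pc.
have /eqP h1 := pr _ _ (adj_hub _ (@ord0 m)).
have /eqP h2 := pr _ _ (adj_hub _ (ordS (@ord0 m))).
have /eqP h3 := pr _ _ (adj_cyc _ (@ord0 m) false).
have l1 := ltn_ord (c None).
have l2 := ltn_ord (c (Some (ord0, false))).
have l3 := ltn_ord (c (Some (ordS ord0, false))).
move: h1 h2 h3 l1 l2 l3.
set x := (c None : nat); set y := (c (Some (ord0, false)) : nat); set z := (c (Some (ordS ord0, false)) : nat).
clearbody x y z; clear; lia.
Qed.

Lemma chi_low_odd m k (c : CH_vertex m.+1 -> 'I_k) : ~~ odd m ->
  proper_colouring (@CH_adj m.+1) c -> 4 <= k.
Proof.
move=> hm pc; have pr := @proper_nat _ _ _ _ pc.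
rewrite leqNgt; apply/negP => hk.
pose F := fun i => (c (Some (i, false)) : nat).
have Fp : forall i, F i != F (ordS i) by move=> i; exact: pr _ _ (adj_cyc _ i false).
have Fh : forall i, F i <> c None by move=> i /eqP; rewrite eq_sym; apply/negP; exact: pr _ _ (adj_hub _ i).
have Fl : forall i, F i < 3 by move=> i; have := ltn_ord (c (Some (i, false))); rewrite /F; lia.
have hl : (c None : nat) < 3 by have := ltn_ord (c None); lia.
have : (c None : nat) = 0 \/ (c None : nat) = 1 \/ (c None : nat) = 2 by lia.
case=> [e|[e|e]].
- apply: (@parity _ _ hm Fp 1 2) => i; have := Fh i; have := Fl i; lia.
- apply: (@parity _ _ hm Fp 0 2) => i; have := Fh i; have := Fl i; lia.
- apply: (@parity _ _ hm Fp 0 1) => i; have := Fh i; have := Fl i; lia.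
Qed.

Lemma low_even m k (c : CH_vertex m.+1 -> 'I_k) : odd m -> 2 <= m -> k <= 3 ->
  proper_colouring (@CH_adj m.+1) c -> 3 * (m.+1 + 1) <= colouring_sum c.
Proof.
move=> hm hm2 hk pc; have pr := @proper_nat _ _ _ _ pc.
rewrite /colouring_sum (@CH_sum m (fun x => nat_of_ord (c x))).
set h := (c None : nat).
pose V := fun i => (c (Some (i, false)) : nat).
pose U := fun i => (c (Some (i, true)) : nat).
have lt : forall x, (c x : nat) < 3 by move=> x; have := ltn_ord (c x); lia.
have VU : forall i, V i <> U i by move=> i; apply/eqP; exact: pr _ _ (adj_spoke _ i).
have VV : forall i, V i <> V (ordS i) by move=> i; apply/eqP; exact: pr _ _ (adj_cyc _ i false).
have UU : forall i, U i <> U (ordS i) by move=> i; apply/eqP; exact: pr _ _ (adj_cyc _ i true).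
have Vh : forall i, V i <> h by move=> i; apply/eqP; rewrite eq_sym; exact: pr _ _ (adj_hub _ i).
have A : m.+1 <= \sum_(i < m.+1) (V i + U i).
  rewrite -[X in X <= _]card_ord -sum1_card; apply: leq_sum => i _.
  by have := VU i; lia.
have B : h < 2 -> 3 * m.+1 <= 2 * \sum_(i < m.+1) (V i + U i).
  move=> h2.
  have : \sum_(i < m.+1) 3 <= \sum_(i < m.+1) ((V i + U i) + (V (ordS i) + U (ordS i))).
    apply: leq_sum => i _.
    have := VU i; have := VU (ordS i); have := VV i; have := UU i; have := Vh i; have := Vh (ordS i).
    have := lt (Some (i, false)); have := lt (Some (i, true)).
    have := lt (Some (ordS i, false)); have := lt (Some (ordS i, true)).
    rewrite /V /U; lia.
  rewrite big_split /= (@sum_ordS _ (fun i => V i + U i)) sum_nat_const card_ord; set S := (X in _ <= X + _ -> _); rewrite -/S; lia.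
rewrite big_split /= in A B.
have := lt None; rewrite -/h; move: A B.
have -> : \sum_(i < m.+1) (c (Some (i, false)) : nat) = \sum_(i < m.+1) V i by [].
have -> : \sum_(i < m.+1) (c (Some (i, true)) : nat) = \sum_(i < m.+1) U i by [].
set SV := \sum_(i < m.+1) V i; set SU := \sum_(i < m.+1) U i.
rewrite -?/SV -?/SU.
lia.
Qed.

Lemma low_odd m k (c : CH_vertex m.+1 -> 'I_k) : ~~ odd m -> 2 <= m -> k <= 4 ->
  proper_colouring (@CH_adj m.+1) c -> 3 * m.+1 + 7 <= colouring_sum c.
Proof.
move=> hm hm2 hk pc; have pr := @proper_nat _ _ _ _ pc.
rewrite /colouring_sum (@CH_sum m (fun x => nat_of_ord (c x))).
set h := (c None : nat).
pose V := fun i => (c (Some (i, false)) : nat).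
pose U := fun i => (c (Some (i, true)) : nat).
have lt : forall x, (c x : nat) < 4 by move=> x; have := ltn_ord (c x); lia.
have VV : forall i, V i != V (ordS i) by move=> i; exact: pr _ _ (adj_cyc _ i false).
have UU : forall i, U i != U (ordS i) by move=> i; exact: pr _ _ (adj_cyc _ i true).
have Vh : forall i, V i <> h by move=> i; apply/eqP; rewrite eq_sym; exact: pr _ _ (adj_hub _ i).
have BU := @cbound m U 0 1 2 hm UU isT isT (fun i => ltac:(have := lt (Some (i, true)); rewrite /U; lia)).
have hl := lt None; rewrite -/h in hl.
have BV : m.+1 + 9 <= 2 * h + 2 * \sum_(i < m.+1) V i.
  have : h = 0 \/ h = 1 \/ h = 2 \/ h = 3 by lia.
  case=> [e|[e|[e|e]]]; rewrite e.
  - have := @cbound m V 1 2 3 hm VV isT isT (fun i => ltac:(have := lt (Some (i, false)); have := Vh i; rewrite /V; lia)).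
    lia.
  - have := @cbound m V 0 2 3 hm VV isT isT (fun i => ltac:(have := lt (Some (i, false)); have := Vh i; rewrite /V; lia)).
    lia.
  - have := @cbound m V 0 1 3 hm VV isT isT (fun i => ltac:(have := lt (Some (i, false)); have := Vh i; rewrite /V; lia)).
    lia.
  - have := @cbound m V 0 1 2 hm VV isT isT (fun i => ltac:(have := lt (Some (i, false)); have := Vh i; rewrite /V; lia)).
    lia.
have -> : \sum_(i < m.+1) (c (Some (i, false)) : nat) = \sum_(i < m.+1) V i by [].
have -> : \sum_(i < m.+1) (c (Some (i, true)) : nat) = \sum_(i < m.+1) U i by [].
move: BU BV.
set SV := \sum_(i < m.+1) V i; set SU := \sum_(i < m.+1) U i.
rewrite -?/SV -?/SU.
lia.
Qed.

Lemma card_CH m : #|CH_vertex m.+1| = (2 * m.+1).+1.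
Proof. by rewrite /CH_vertex card_option card_prod card_ord card_bool mulnC. Qed.

Lemma chi_CH m : 2 <= m -> chromatic_number (@CH_adj m.+1) = if odd m then 3 else 4.
Proof.
move=> hm2; rewrite /chromatic_number.
have hc : (if odd m then 3 else 4) < #|CH_vertex m.+1|.+1.
  by rewrite card_CH; case: (odd m); lia.
apply: bigmin_eq.
- exists (Ordinal hc) => //=.
  apply/existsP; case hm: (odd m).
  + exists [ffun x => (inord (colE m x) : 'I_3)].
    by apply: proper_of_col => [x|]; [exact: colE_lt | exact: colE_proper].
  + exists [ffun x => (inord (colO m x) : 'I_4)].
    by apply: proper_of_col => [x|]; [exact: colO_lt | apply: colO_proper; rewrite ?hm].
- move=> i /existsP [c pc].
  case hm: (odd m).
  + exact: chi_low_even pc.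
  + by apply: chi_low_odd pc; rewrite hm.
- by rewrite card_CH; case: (odd m); lia.
Qed.

Theorem theorem2p9 (n : nat) (hn : 3 <= n) :
  chi_chromatic_sum (@CH_adj n) = (if odd n then 3 * n + 7 else 3 * (n + 1)).
Proof.
case: n hn => [|m] // hn; have hm2 : 2 <= m by lia.
rewrite /chi_chromatic_sum; move: (@chi_CH m hm2).
move: (chromatic_number (@CH_adj m.+1)) => k hk /=.
case hm: (odd m) hk => /= -> /=.
- apply: bigmin_eq.
  + exists [ffun x => (inord (colE m x) : 'I_3)].
      by apply: proper_of_col => [x|]; [exact: colE_lt | exact: colE_proper].
    by rewrite sum_of_col ?colE_sum //; exact: colE_lt.
  + by move=> c pc; apply: low_even pc.
  + by rewrite card_CH; lia.
- apply: bigmin_eq.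
  + exists [ffun x => (inord (colO m x) : 'I_4)].
      by apply: proper_of_col => [x|]; [exact: colO_lt | apply: colO_proper; rewrite ?hm].
    by rewrite sum_of_col ?colO_sum ?hm //; exact: colO_lt.
  + by move=> c pc; apply: low_odd pc; rewrite ?hm.
  + by rewrite card_CH; lia.
Qed.
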